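(* Let $\Gamma$ be an angled $G$-graph such that for each subgroup $K\le G$, every regular $K$-section of $\Gamma$ has curvature $\le\alpha$, where $\alpha\le0$. Suppose $H$ is a subgroup of $G$ and $\Delta$ is a non-empty spurless $H$-section of $\Gamma$. Then: (1) if $\Delta$ contains an edge, $\kappa(H,\Delta)\le\alpha$; (2) $\kappa(H,\Delta)>0$ if and only if $\Delta$ is a single vertex and $H$ is a finite group.
   Context: An angled $G$-graph is a graph with a $G$-action and a $G$-invariant map $\measuredangle$ from edges to $\mathbb R$. For a group $K$, $|K|^{-1}=1/|K|$ if $K$ finite, else $0$. For a graph $\Delta$ with a $K$-action and finitely many $K$-orbits of cells, $\kappa(K,\Delta)=2\pi|K|^{-1}-\sum_v\pi|K_v|^{-1}+\sum_e(\pi-\measuredangle(e))|K_e|^{-1}$ (sums over orbit representatives of vertices and edges; $K_v,K_e$ stabilizers in $K$); this is the curvature of $\Delta$. For $H\le G$, an $H$-section of $\Gamma$ is an $H$-invariant subgraph with finitely many $H$-orbits of cells; it is spurless if it has no vertex of valence one, and regular if it is spurless, connected, and has at least one edge. *)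

(* Defs.v *)
From Stdlib Require Import Reals List Relations ClassicalEpsilon ClassicalDescription.
Import ListNotations.
Open Scope R_scope.

Record Group := {
  gcar :> Type;
  gmul : gcar -> gcar -> gcar;
  gone : gcar;
  ginv : gcar -> gcar;
  gmulA : forall x y z, gmul x (gmul y z) = gmul (gmul x y) z;
  gmul1 : forall x, gmul gone x = x;
  gmulV : forall x, gmul (ginv x) x = gone
}.

Definition subgroup (G : Group) (K : G -> Prop) : Prop :=
  K (gone G) /\ (forall x y, K x -> K y -> K (gmul G x y)) /\
  (forall x, K x -> K (ginv G x)).

(** Angled G-graphs: vertices V, (geometric) edges E with two endpoints
   (loops and multiple edges allowed), a G-action on vertices and edges
   preserving incidence (possibly inverting edges), and a G-invariant
   angle map from edges to R. *)
Record angled_graph (G : Group) := {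
  V : Type;
  E : Type;
  src : E -> V;
  tgt : E -> V;
  actV : G -> V -> V;
  actE : G -> E -> E;
  actV1 : forall v, actV (gone G) v = v;
  actVM : forall g h v, actV (gmul G g h) v = actV g (actV h v);
  actE1 : forall e, actE (gone G) e = e;
  actEM : forall g h e, actE (gmul G g h) e = actE g (actE h e);
  act_incid : forall g e,
    (src (actE g e) = actV g (src e) /\ tgt (actE g e) = actV g (tgt e)) \/
    (src (actE g e) = actV g (tgt e) /\ tgt (actE g e) = actV g (src e));
  angle : E -> R;
  angle_inv : forall g e, angle (actE g e) = angle e
}.

Arguments V {G}. Arguments E {G}. Arguments src {G}. Arguments tgt {G}.
Arguments actV {G}. Arguments actE {G}. Arguments angle {G}.

(** |A|^{-1}: 1/|A| if A is finite, 0 otherwise. *)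
Definition fin_enum {T : Type} (A : T -> Prop) (l : list T) : Prop :=
  NoDup l /\ forall x, A x <-> In x l.

Definition inv_card {T : Type} (A : T -> Prop) : R :=
  if excluded_middle_informative (exists l, fin_enum A l)
  then / INR (length (epsilon (inhabits (@nil T)) (fin_enum A)))
  else 0.

Definition group_finite (G : Group) (K : G -> Prop) : Prop :=
  exists l, fin_enum K l.

Definition stabV {G} (Γ : angled_graph G) (K : G -> Prop) (v : V Γ) : G -> Prop :=
  fun k => K k /\ actV Γ k v = v.
Definition stabE {G} (Γ : angled_graph G) (K : G -> Prop) (e : E Γ) : G -> Prop :=
  fun k => K k /\ actE Γ k e = e.

Definition transversal {G : Group} {T : Type} (act : G -> T -> T)
    (K : G -> Prop) (D : T -> Prop) (l : list T) : Prop :=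
  NoDup l /\ (forall x, In x l -> D x) /\
  (forall x, D x -> exists y k, In y l /\ K k /\ act k y = x) /\
  (forall x y k, In x l -> In y l -> K k -> act k x = y -> x = y).

Definition sumR {T : Type} (f : T -> R) (l : list T) : R :=
  fold_right Rplus 0 (map f l).

(** Curvature kappa(K, Delta), Delta = (DV, DE), computed from a chosen
   system of orbit representatives (the value is independent of the choice). *)
Definition kappa {G} (Γ : angled_graph G) (K : G -> Prop)
    (DV : V Γ -> Prop) (DE : E Γ -> Prop) : R :=
  let reps := epsilon (inhabits (@nil (V Γ), @nil (E Γ)))
      (fun p => transversal (actV Γ) K DV (fst p) /\
                transversal (actE Γ) K DE (snd p)) in
  2 * PI * inv_card K
  - sumR (fun v => PI * inv_card (stabV Γ K v)) (fst reps)
  + sumR (fun e => (PI - angle Γ e) * inv_card (stabE Γ K e)) (snd reps).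

Definition subgraph {G} (Γ : angled_graph G) (DV : V Γ -> Prop) (DE : E Γ -> Prop) :=
  forall e, DE e -> DV (src Γ e) /\ DV (tgt Γ e).

Definition invariant {G} (Γ : angled_graph G) (K : G -> Prop)
    (DV : V Γ -> Prop) (DE : E Γ -> Prop) :=
  (forall k v, K k -> DV v -> DV (actV Γ k v)) /\
  (forall k e, K k -> DE e -> DE (actE Γ k e)).

Definition finitely_many_orbits {G} (Γ : angled_graph G) (K : G -> Prop)
    (DV : V Γ -> Prop) (DE : E Γ -> Prop) :=
  (exists l, forall v, DV v -> exists y k, In y l /\ K k /\ actV Γ k y = v) /\
  (exists l, forall e, DE e -> exists y k, In y l /\ K k /\ actE Γ k y = e).

Definition section {G} (Γ : angled_graph G) (K : G -> Prop)
    (DV : V Γ -> Prop) (DE : E Γ -> Prop) :=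
  subgraph Γ DV DE /\ invariant Γ K DV DE /\ finitely_many_orbits Γ K DV DE.

Definition endpt {G} (Γ : angled_graph G) (e : E Γ) (b : bool) : V Γ :=
  if b then src Γ e else tgt Γ e.

(** v has valence one in (DV,DE): exactly one edge-end of DE at v
   (a loop contributes two ends). *)
Definition valence_one {G} (Γ : angled_graph G) (DE : E Γ -> Prop) (v : V Γ) :=
  exists e b, DE e /\ endpt Γ e b = v /\
    forall e' b', DE e' -> endpt Γ e' b' = v -> e' = e /\ b' = b.

Definition spurless {G} (Γ : angled_graph G) (DV : V Γ -> Prop) (DE : E Γ -> Prop) :=
  forall v, DV v -> ~ valence_one Γ DE v.

Definition adj {G} (Γ : angled_graph G) (DE : E Γ -> Prop) : relation (V Γ) :=
  fun u w => exists e, DE e /\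
    ((src Γ e = u /\ tgt Γ e = w) \/ (src Γ e = w /\ tgt Γ e = u)).

Definition connected {G} (Γ : angled_graph G) (DV : V Γ -> Prop) (DE : E Γ -> Prop) :=
  forall u w, DV u -> DV w -> clos_refl_trans (V Γ) (adj Γ DE) u w.

Definition regular_section {G} (Γ : angled_graph G) (K : G -> Prop)
    (DV : V Γ -> Prop) (DE : E Γ -> Prop) :=
  section Γ K DV DE /\ spurless Γ DV DE /\ connected Γ DV DE /\ exists e, DE e.

(* Main.v *)
Require Import Defs.
From Stdlib Require Import Reals Lra List Permutation ClassicalEpsilon ClassicalDescription
  FunctionalExtensionality PropExtensionality Classical Relations Lia.
Import ListNotations.
Open Scope R_scope.

Section Grp.
Variable G : Group.
Lemma gmulVr (x : G) : gmul G x (ginv G x) = gone G.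
Proof.
  rewrite <- (gmul1 G (gmul G x (ginv G x))).
  rewrite <- (gmulV G (ginv G x)) at 1.
  rewrite <- gmulA. rewrite (gmulA G (ginv G x) x). rewrite gmulV.
  rewrite gmul1. apply gmulV.
Qed.
Lemma gmul1r (x : G) : gmul G x (gone G) = x.
Proof. rewrite <- (gmulV G x), gmulA, gmulVr. apply gmul1. Qed.
End Grp.

Definition dec (P : Prop) : bool := if excluded_middle_informative P then true else false.
Lemma decP (P : Prop) : dec P = true <-> P.
Proof. unfold dec; destruct excluded_middle_informative; split; congruence || tauto. Qed.
Lemma decN (P : Prop) : dec P = false <-> ~ P.
Proof. unfold dec; destruct excluded_middle_informative; split; congruence || tauto. Qed.

Lemma fin_enum_len {T} (A : T -> Prop) l1 l2 : fin_enum A l1 -> fin_enum A l2 -> length l1 = length l2.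
Proof.
  intros [N1 H1] [N2 H2]. apply Nat.le_antisymm; apply NoDup_incl_length; auto;
  intros x Hx; [apply H2, H1 | apply H1, H2]; auto.
Qed.

Lemma inv_card_fin {T} (A : T -> Prop) l : fin_enum A l -> inv_card A = / INR (length l).
Proof.
  intros Hl. unfold inv_card. destruct excluded_middle_informative as [e|n].
  - rewrite (fin_enum_len A _ l); auto. apply epsilon_spec; eauto.
  - exfalso; eauto.
Qed.
Lemma inv_card_inf {T} (A : T -> Prop) : ~ (exists l, fin_enum A l) -> inv_card A = 0.
Proof. intros n. unfold inv_card. destruct excluded_middle_informative; tauto. Qed.

Lemma inv_card_ge0 {T} (A : T -> Prop) : 0 <= inv_card A.
Proof.
  unfold inv_card. destruct excluded_middle_informative; [|lra].
  destruct (length _). simpl. rewrite Rinv_0; lra.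
  apply Rlt_le, Rinv_0_lt_compat, lt_0_INR; lia.
Qed.

Lemma inv_card_ext {T} (A B : T -> Prop) : (forall x, A x <-> B x) -> inv_card A = inv_card B.
Proof.
  intros h. assert (A = B) as ->; auto.
  apply functional_extensionality; intros; apply propositional_extensionality; auto.
Qed.

Lemma inv_card_bij {T} (A B : T -> Prop) (f g : T -> T) :
  (forall x, A x -> B (f x)) -> (forall y, B y -> A (g y)) ->
  (forall x, A x -> g (f x) = x) -> (forall y, B y -> f (g y) = y) ->
  inv_card A = inv_card B.
Proof.
  intros hf hg gf fg.
  assert (Hfin : forall (A B : T -> Prop) f g, (forall x, A x -> B (f x)) -> (forall y, B y -> A (g y)) ->
     (forall x, A x -> g (f x) = x) -> (forall y, B y -> f (g y) = y) ->
     forall l, fin_enum A l -> fin_enum B (map f l)).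
  { clear. intros A B f g hf hg gf fg l [N Hl]. split.
    - apply NoDup_map_NoDup_ForallPairs; auto. intros a b ha hb e.
      rewrite <- (gf a), <- (gf b); try apply Hl; auto. congruence.
    - intros y; split.
      + intros hy. rewrite <- (fg y hy). apply in_map, Hl; auto.
      + intros hy. apply in_map_iff in hy as [x [<- hx]]. apply hf, Hl; auto. }
  destruct (classic (exists l, fin_enum A l)) as [[l hl]|n].
  - rewrite (inv_card_fin A l hl), (inv_card_fin B (map f l)).
    now rewrite length_map. eapply Hfin; eauto.
  - rewrite (inv_card_inf A n), inv_card_inf; auto.
    intros [l hl]; apply n; exists (map g l); eapply Hfin; eauto.
Qed.

Lemma sub_fin {T} (A C : T -> Prop) lc : (forall x, A x -> C x) -> fin_enum C lc ->
  fin_enum A (filter (fun x => dec (A x)) lc).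
Proof.
  intros s [N h]. split. apply NoDup_filter; auto.
  intros x. rewrite filter_In, decP. split; [intros; split; auto; apply h; auto| tauto].
Qed.

Lemma inv_card_sub {T} (A C : T -> Prop) : (forall x, A x -> C x) -> (exists x, A x) ->
  inv_card C <= inv_card A.
Proof.
  intros s [a ha].
  destruct (classic (exists l, fin_enum C l)) as [[lc hc]|n].
  - pose proof (sub_fin A C lc s hc) as hA.
    rewrite (inv_card_fin _ _ hc), (inv_card_fin _ _ hA).
    assert (length (filter (fun x => dec (A x)) lc) <= length lc)%nat by apply filter_length_le.
    assert (0 < length (filter (fun x => dec (A x)) lc))%nat.
    { destruct hA as [_ h]. apply h in ha. destruct (filter _ _); simpl in *; [contradiction|lia]. }
    apply Rinv_le_contravar. apply lt_0_INR; auto. apply le_INR; auto.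
  - rewrite inv_card_inf; auto. apply inv_card_ge0.
Qed.

Lemma inv_card_two {T} (A C : T -> Prop) (f g : T -> T) :
  (forall x, A x -> C x) -> (forall x, A x -> C (f x)) -> (forall x, A x -> ~ A (f x)) ->
  (forall x, A x -> g (f x) = x) -> (exists x, A x) ->
  2 * inv_card C <= inv_card A.
Proof.
  intros s sf disj gf [a ha].
  destruct (classic (exists l, fin_enum C l)) as [[lc hc]|n].
  - pose proof (sub_fin A C lc s hc) as hA. set (la := filter _ lc) in *.
    rewrite (inv_card_fin _ _ hc), (inv_card_fin _ _ hA).
    assert (ND : NoDup (la ++ map f la)).
    { destruct hA as [N h]. apply NoDup_app; auto.
      - apply NoDup_map_NoDup_ForallPairs; auto. intros x y hx hy e.
        rewrite <- (gf x), <- (gf y); try apply h; auto. congruence.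
      - intros x hx hx'. apply in_map_iff in hx' as [y [<- hy]]. apply h in hy, hx. eapply disj; eauto. }
    assert (length (la ++ map f la) <= length lc)%nat.
    { apply NoDup_incl_length; auto. intros x hx. apply in_app_or in hx as [hx|hx]; destruct hA as [_ h]; destruct hc as [_ hc'].
      apply hc', s, h; auto. apply in_map_iff in hx as [y [<- hy]]. apply hc', sf, h; auto. }
    rewrite length_app, length_map in H.
    assert (0 < length la)%nat.
    { destruct hA as [_ h]. apply h in ha. destruct la; simpl in *; [contradiction|lia]. }
    assert (0 < INR (length la)) by (apply lt_0_INR; auto).
    assert (INR (length la + length la) <= INR (length lc)) by (apply le_INR; auto).
    rewrite plus_INR in H2.
    assert (0 < INR (length lc)) by lra.
    apply (Rmult_le_reg_r (INR (length lc) * INR (length la))). nra.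
    field_simplify; lra.
  - rewrite (inv_card_inf C); auto. rewrite Rmult_0_r. apply inv_card_ge0.
Qed.
Lemma sumR_cons {T} (f : T -> R) x l : sumR f (x :: l) = f x + sumR f l.
Proof. reflexivity. Qed.
Lemma sumR_nil {T} (f : T -> R) : sumR f [] = 0.
Proof. reflexivity. Qed.
Lemma sumR_perm {T} (f : T -> R) l1 l2 : Permutation l1 l2 -> sumR f l1 = sumR f l2.
Proof. induction 1; simpl; unfold sumR in *; simpl; lra. Qed.
Lemma sumR_ext_in {T} (f g : T -> R) l : (forall x, In x l -> f x = g x) -> sumR f l = sumR g l.
Proof. induction l; simpl; intros h; auto. unfold sumR in *; simpl. rewrite h, IHl; auto. Qed.
Lemma sumR_map {T U} (f : U -> R) (p : T -> U) l : sumR f (map p l) = sumR (fun x => f (p x)) l.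
Proof. unfold sumR. rewrite map_map. auto. Qed.
Lemma sumR_filter {T} (f : T -> R) (p : T -> bool) l :
  sumR f l = sumR f (filter p l) + sumR f (filter (fun x => negb (p x)) l).
Proof. induction l; simpl. unfold sumR; simpl; lra. destruct (p a); simpl; unfold sumR in *; simpl; lra. Qed.
Lemma sumR_ge0 {T} (f : T -> R) l : (forall x, In x l -> 0 <= f x) -> 0 <= sumR f l.
Proof. induction l; simpl; intros h. unfold sumR; simpl; lra. unfold sumR in *; simpl. pose proof (h a (or_introl eq_refl)). pose proof (IHl (fun x hx => h x (or_intror hx))). lra. Qed.

Section Trans.
Variable G : Group.
Variable T : Type.
Variable act : G -> T -> T.
Hypothesis act1 : forall x, act (gone G) x = x.
Hypothesis actM : forall g h x, act (gmul G g h) x = act g (act h x).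
Variable K : G -> Prop.
Hypothesis HK : subgroup G K.

Lemma act_invl k x : act (ginv G k) (act k x) = x.
Proof. rewrite <- actM, gmulV; auto. Qed.
Lemma act_invr k x : act k (act (ginv G k) x) = x.
Proof. rewrite <- actM, gmulVr; auto. Qed.

Definition orb x y := exists k, K k /\ act k x = y.
Lemma orb_refl x : orb x x.
Proof. exists (gone G); split; auto. apply HK. Qed.
Lemma orb_sym x y : orb x y -> orb y x.
Proof. intros [k [hk <-]]. exists (ginv G k); split. apply HK; auto. apply act_invl. Qed.
Lemma orb_trans x y z : orb x y -> orb y z -> orb x z.
Proof. intros [k [hk <-]] [k' [hk' <-]]. exists (gmul G k' k); split. apply HK; auto. auto. Qed.

Lemma trans_sum_eq (D : T -> Prop) l1 l2 (f : T -> R) :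
  transversal act K D l1 -> transversal act K D l2 ->
  (forall k x, K k -> D x -> f (act k x) = f x) ->
  sumR f l1 = sumR f l2.
Proof.
  intros [N1 [D1 [C1 U1]]] [N2 [D2 [C2 U2]]] finv.
  set (phi := fun x => epsilon (inhabits x) (fun y => In y l2 /\ orb y x)).
  assert (Hphi : forall x, D x -> In (phi x) l2 /\ orb (phi x) x).
  { intros x hx. apply epsilon_spec. destruct (C2 x hx) as [y [k [hy [hk e]]]]. exists y; split; auto. exists k; auto. }
  transitivity (sumR f (map phi l1)).
  - rewrite sumR_map. apply sumR_ext_in. intros x hx. destruct (Hphi x (D1 x hx)) as [_ [k [hk e]]].
    rewrite <- e at 1. rewrite finv; auto. apply D2, Hphi, D1; auto.
  - apply sumR_perm, NoDup_Permutation; auto.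
    + apply NoDup_map_NoDup_ForallPairs; auto. intros a b ha hb e.
      destruct (Hphi a (D1 a ha)) as [_ oa]. destruct (Hphi b (D1 b hb)) as [_ ob].
      rewrite e in oa. destruct (orb_trans _ _ _ (orb_sym _ _ oa) ob) as [k [hk ek]]. eapply U1; eauto.
    + intros y; split.
      * intros hy. apply in_map_iff in hy as [x [<- hx]]. apply Hphi, D1; auto.
      * intros hy. destruct (C1 y (D2 y hy)) as [x [k [hx [hk e]]]].
        apply in_map_iff. exists x; split; auto.
        destruct (Hphi x (D1 x hx)) as [i o].
        assert (orb (phi x) y) as [k' [hk' e']] by (eapply orb_trans; eauto; exists k; auto).
        eapply U2; eauto.
Qed.

Lemma trans_exists (D : T -> Prop) l :
  (forall k x, K k -> D x -> D (act k x)) ->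
  (forall x, D x -> exists y k, In y l /\ K k /\ act k y = x) ->
  exists t, transversal act K D t.
Proof.
  intros Dinv Cov.
  assert (forall l, exists t, NoDup t /\ (forall x, In x t -> D x) /\
     (forall x y, In x t -> In y t -> orb x y -> x = y) /\
     (forall y, In y l -> D y -> exists z, In z t /\ orb z y)) as Hgen.
  { clear Cov. intros l0. induction l0 as [|y l1 IH].
    - exists []; repeat split; simpl; try tauto; constructor.
    - destruct IH as [t [N [Dt [Ut Ct]]]].
      destruct (classic (D y /\ ~ exists z, In z t /\ orb z y)) as [[dy nz]|o].
      + exists (y :: t); repeat split.
        * constructor; auto. intros hy; apply nz; exists y; split; auto; apply orb_refl.
        * intros x [<-|hx]; auto.
        * intros a b [<-|ha] [<-|hb] o; auto.
          -- exfalso; apply nz; exists b; split; auto; apply orb_sym; auto.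
          -- exfalso; apply nz; exists a; split; auto.
        * intros z [ez|hz] dz. subst z. exists y; split; [left; auto| apply orb_refl].
          destruct (Ct z hz dz) as [w [hw o]]; exists w; split; [right|]; auto.
      + exists t; repeat split; auto.
        intros z [ez|hz] dz; auto. subst z. apply NNPP; intros nn; apply o; split; auto. }
  destruct (Hgen l) as [t [N [Dt [Ut Ct]]]]. exists t; repeat split; auto.
  - intros x hx. destruct (Cov x hx) as [y [k [hy [hk e]]]].
    assert (D y) as dy. { rewrite <- (act_invl k y), e. apply Dinv; auto. apply HK; auto. }
    destruct (Ct y hy dy) as [z [hz [k' [hk' e']]]]. exists z, (gmul G k k'). repeat split; auto.
    apply HK; auto. rewrite actM, e'; auto.
  - intros x y k hx hy hk e. apply Ut; auto. exists k; auto.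
Qed.
End Trans.
Lemma conj_cancel (G : Group) (k h : G) :
  gmul G (ginv G k) (gmul G (gmul G k (gmul G h (ginv G k))) k) = h.
Proof.
  rewrite <- (gmulA G k). rewrite <- (gmulA G h). rewrite gmulV, gmul1r.
  rewrite gmulA, gmulV, gmul1. auto.
Qed.

Lemma stab_conj (G : Group) T (act : G -> T -> T)
  (act1 : forall x, act (gone G) x = x)
  (actM : forall g h x, act (gmul G g h) x = act g (act h x))
  (K : G -> Prop) (HK : subgroup G K) k x : K k ->
  inv_card (fun h => K h /\ act h (act k x) = act k x) = inv_card (fun h => K h /\ act h x = x).
Proof.
  intros hk. destruct HK as [K1 [KM KV]].
  symmetry. apply (inv_card_bij _ _ (fun h => gmul G k (gmul G h (ginv G k)))
                               (fun h => gmul G (ginv G k) (gmul G h k))).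
  - intros h [hh e]. split. { apply KM; [|apply KM]; auto. }
    rewrite !actM, act_invl; auto. congruence.
  - intros h [hh e]. split. { apply KM; [|apply KM]; auto. }
    rewrite !actM, e. apply act_invl; auto.
  - intros h _. apply conj_cancel.
  - intros h _. pose proof (conj_cancel G (ginv G k) h) as c.
    assert (ginv G (ginv G k) = k) as E.
    { rewrite <- (gmul1r G (ginv G (ginv G k))), <- (gmulV G k), gmulA, gmulV, gmul1. auto. }
    rewrite E in c. auto.
Qed.

Section Kap.
Variable G : Group.
Variable Γ : angled_graph G.

Definition SV (K : G -> Prop) l := sumR (fun v => PI * inv_card (stabV Γ K v)) l.
Definition SE (K : G -> Prop) l := sumR (fun e => (PI - angle Γ e) * inv_card (stabE Γ K e)) l.

Lemma kappa_eq K DV DE lv le : subgroup G K ->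
  transversal (actV Γ) K DV lv -> transversal (actE Γ) K DE le ->
  kappa Γ K DV DE = 2 * PI * inv_card K - SV K lv + SE K le.
Proof.
  intros HK tv te. unfold kappa.
  set (reps := epsilon _ _).
  assert (Hr : transversal (actV Γ) K DV (fst reps) /\ transversal (actE Γ) K DE (snd reps)).
  { apply epsilon_spec. exists (lv, le); auto. }
  destruct Hr as [r1 r2]. cbv zeta. unfold SV, SE.
  rewrite (trans_sum_eq G _ (actV Γ) (actV1 _ Γ) (actVM _ Γ) K HK DV (fst reps) lv); auto.
  rewrite (trans_sum_eq G _ (actE Γ) (actE1 _ Γ) (actEM _ Γ) K HK DE (snd reps) le); auto.
  - intros k e hk _. rewrite angle_inv. unfold stabE.
    rewrite (stab_conj G _ (actE Γ) (actE1 _ Γ) (actEM _ Γ) K HK k e); auto.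
  - intros k v hk _. unfold stabV.
    rewrite (stab_conj G _ (actV Γ) (actV1 _ Γ) (actVM _ Γ) K HK k v); auto.
Qed.
End Kap.
Arguments SV {G}. Arguments SE {G}.
Lemma trans_split (G : Group) T (act : G -> T -> T)
  (act1 : forall x, act (gone G) x = x)
  (actM : forall g h x, act (gmul G g h) x = act g (act h x))
  (K K' : G -> Prop) (HK : subgroup G K) (D Q Pp : T -> Prop) l :
  transversal act K D l ->
  (forall k x, K k -> D x -> (Pp (act k x) <-> Pp x)) ->
  (forall x, D x -> Pp x -> exists k, K k /\ Q (act k x)) ->
  (forall x, Q x -> D x /\ Pp x) ->
  (forall h, K' h -> K h) ->
  (forall h a, K h -> Q a -> Q (act h a) -> K' h) ->
  (forall h a, K' h -> Q a -> Q (act h a)) ->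
  transversal act K (fun x => D x /\ ~ Pp x) (filter (fun x => negb (dec (Pp x))) l) /\
  exists l', transversal act K' Q l' /\
    forall f : T -> R, (forall k x, K k -> D x -> f (act k x) = f x) ->
      sumR f (filter (fun x => dec (Pp x)) l) = sumR f l'.
Proof.
  intros [N [Dl [Cl Ul]]] Pinv Pex QDP K'K crit Qinv.
  assert (Kinv : forall k, K k -> K (ginv G k)) by apply HK.
  assert (Kmul : forall k k', K k -> K k' -> K (gmul G k k')) by apply HK.
  split.
  - split; [|split; [|split]].
    + apply NoDup_filter; auto.
    + intros x hx. apply filter_In in hx as [hx p]. split. apply Dl; auto.
      apply decN. destruct (dec (Pp x)); simpl in *; congruence.
    + intros x [dx npx]. destruct (Cl x dx) as [y [k [hy [hk e]]]]. exists y, k; repeat split; auto.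
      apply filter_In; split; auto. rewrite <- e in npx. rewrite Pinv in npx; auto.
      apply decN in npx. rewrite npx; auto.
    + intros x y k hx hy. apply filter_In in hx as [hx _]. apply filter_In in hy as [hy _]. eapply Ul; eauto.
  - set (psi := fun x => act (epsilon (inhabits (gone G)) (fun k => K k /\ Q (act k x))) x).
    assert (Hpsi : forall x, D x -> Pp x -> exists k, K k /\ Q (act k x) /\ psi x = act k x).
    { intros x dx px. unfold psi. set (k := epsilon _ _).
      assert (K k /\ Q (act k x)) as [] by (apply epsilon_spec; auto). exists k; auto. }
    set (lf := filter (fun x => dec (Pp x)) l).
    assert (Hlf : forall x, In x lf <-> In x l /\ Pp x).
    { intros z. unfold lf. rewrite filter_In, decP. tauto. }
    exists (map psi lf). split.
    + split; [|split; [|split]].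
      * apply NoDup_map_NoDup_ForallPairs. 2: apply NoDup_filter; auto.
        intros a b ha hb e. apply Hlf in ha as [ha pa]. apply Hlf in hb as [hb pb].
        destruct (Hpsi a (Dl a ha) pa) as [k [hk [_ ea]]]. destruct (Hpsi b (Dl b hb) pb) as [k' [hk' [_ eb]]].
        apply (Ul a b (gmul G (ginv G k') k)); auto. rewrite actM, <- ea, e, eb. apply act_invl; auto.
      * intros x hx. apply in_map_iff in hx as [y [<- hy]]. apply Hlf in hy as [hy py].
        destruct (Hpsi y (Dl y hy) py) as [k [hk [q e]]]. rewrite e; auto.
      * intros x qx. destruct (QDP x qx) as [dx px]. destruct (Cl x dx) as [y [k [hy [hk e]]]].
        assert (py : Pp y) by (rewrite <- (Pinv k); auto; rewrite e; auto).
        destruct (Hpsi y (Dl y hy) py) as [k' [hk' [q e']]].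
        exists (psi y), (gmul G k (ginv G k')). split; [apply in_map, Hlf; auto|].
        assert (E : act (gmul G k (ginv G k')) (psi y) = x).
        { rewrite e', actM, act_invl; auto. }
        split; auto. apply (crit _ (psi y)); auto. rewrite e'; auto. rewrite E; auto.
      * intros x y k hx hy hk e. apply in_map_iff in hx as [a [<- ha]]. apply in_map_iff in hy as [b [<- hb]].
        apply Hlf in ha as [ha pa]. apply Hlf in hb as [hb pb].
        destruct (Hpsi a (Dl a ha) pa) as [ka [hka [_ ea]]]. destruct (Hpsi b (Dl b hb) pb) as [kb [hkb [_ eb]]].
        f_equal. apply (Ul a b (gmul G (ginv G kb) (gmul G k ka))); try solve [auto | apply Kmul; auto; apply Kmul; auto].
        rewrite actM, actM, <- ea, e, eb. apply act_invl; auto.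
    + intros f finv. rewrite sumR_map. apply sumR_ext_in. intros x hx. apply Hlf in hx as [hx px].
      destruct (Hpsi x (Dl x hx) px) as [k [hk [_ e]]]. rewrite e, finv; auto.
Qed.
Section Comp.
Variable G : Group.
Variable Γ : angled_graph G.
Variable H : G -> Prop.
Hypothesis HH : subgroup G H.
Variables (DV : V Γ -> Prop) (DE : E Γ -> Prop).
Hypothesis Hsec : section Γ H DV DE.

Definition crt := clos_refl_trans (V Γ) (adj Γ DE).

Lemma adj_sym a b : adj Γ DE a b -> adj Γ DE b a.
Proof. intros [e [de o]]. exists e; split; auto; tauto. Qed.
Lemma crt_sym a b : crt a b -> crt b a.
Proof. induction 1. apply rt_step, adj_sym; auto. apply rt_refl. eapply rt_trans; eauto. Qed.
Lemma crt_trans a b c : crt a b -> crt b c -> crt a c.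
Proof. apply rt_trans. Qed.

Lemma edge_crt e : DE e -> crt (src Γ e) (tgt Γ e).
Proof. intros de. apply rt_step. exists e; split; auto. Qed.
Lemma endpt_crt e b : DE e -> crt (src Γ e) (endpt Γ e b).
Proof. intros de; destruct b; simpl. apply rt_refl. apply edge_crt; auto. Qed.

Lemma adj_act k a b : H k -> adj Γ DE a b -> adj Γ DE (actV Γ k a) (actV Γ k b).
Proof.
  destruct Hsec as [_ [[_ IE] _]].
  intros hk [e [de o]]. exists (actE Γ k e); split; auto.
  destruct (act_incid _ Γ k e) as [[e1 e2]|[e1 e2]]; rewrite e1, e2;
  destruct o as [[<- <-]|[<- <-]]; auto.
Qed.
Lemma crt_act k a b : H k -> crt a b -> crt (actV Γ k a) (actV Γ k b).
Proof. intros hk. induction 1. apply rt_step, adj_act; auto. apply rt_refl. eapply rt_trans; eauto. Qed.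

Lemma crt_DV a b : DV a -> crt a b -> DV b.
Proof.
  destruct Hsec as [SG _]. intros da h. induction h; auto.
  destruct H0 as [e [de [[<- <-]|[<- <-]]]]; apply SG; auto.
Qed.

Lemma act_src_crt k e : H k -> DE e -> crt (actV Γ k (src Γ e)) (src Γ (actE Γ k e)).
Proof.
  intros hk de. destruct (act_incid _ Γ k e) as [[e1 e2]|[e1 e2]]; rewrite e1.
  apply rt_refl. apply crt_act; auto. apply edge_crt; auto.
Qed.

Lemma H_inv k : H k -> H (ginv G k).
Proof. apply HH. Qed.
Lemma H_mul k k' : H k -> H k' -> H (gmul G k k').
Proof. apply HH. Qed.

Variable u : V Γ.
Hypothesis Hu : DV u.

Definition CV w := DV w /\ crt u w.
Definition CE e := DE e /\ crt u (src Γ e).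
Definition HC h := H h /\ crt u (actV Γ h u).

Lemma HC_sub : subgroup G HC.
Proof.
  split; [|split].
  - split. apply HH. rewrite actV1. apply rt_refl.
  - intros x y [hx cx] [hy cy]. split. apply H_mul; auto.
    rewrite actVM. eapply crt_trans. apply cx. apply crt_act; auto.
  - intros x [hx cx]. split. apply H_inv; auto.
    apply crt_sym. pose proof (crt_act (ginv G x) _ _ (H_inv x hx) cx) as c.
    rewrite (act_invl G _ (actV Γ) (actV1 _ Γ) (actVM _ Γ)) in c. auto.
Qed.

Lemma HC_of h a : H h -> crt u a -> crt u (actV Γ h a) -> HC h.
Proof.
  intros hh ca cha. split; auto. eapply crt_trans. apply cha.
  apply crt_sym, crt_act; auto.
Qed.

Lemma HC_ofE h e : H h -> CE e -> CE (actE Γ h e) -> HC h.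
Proof.
  intros hh [de ce] [de' ce']. apply (HC_of h (src Γ e)); auto.
  eapply crt_trans. apply ce'. apply crt_sym, act_src_crt; auto.
Qed.

Lemma stabV_HC v : CV v -> forall h, stabV Γ HC v h <-> stabV Γ H v h.
Proof.
  intros [dv cv] h; unfold stabV; split. intros [[hh _] e]; auto.
  intros [hh e]; split; auto. apply (HC_of h v); auto. rewrite e; auto.
Qed.
Lemma stabE_HC e : CE e -> forall h, stabE Γ HC e h <-> stabE Γ H e h.
Proof.
  intros ce h; unfold stabE; split. intros [[hh _] e']; auto.
  intros [hh e']; split; auto. apply (HC_ofE h e); auto. rewrite e'; auto.
Qed.
Lemma crt_gen_sym (D : E Γ -> Prop) a b : clos_refl_trans (V Γ) (adj Γ D) a b -> clos_refl_trans (V Γ) (adj Γ D) b a.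
Proof.
  induction 1. apply rt_step. destruct H0 as [e [de o]]. exists e; split; auto; tauto.
  apply rt_refl. eapply rt_trans; eauto.
Qed.

Lemma CV_invE h e : HC h -> CE e -> CE (actE Γ h e).
Proof.
  destruct Hsec as [_ [[_ IE] _]]. intros [hh ch] [de ce]. split; auto.
  eapply crt_trans. apply ch. eapply crt_trans. apply crt_act; eauto. apply act_src_crt; auto.
Qed.
Lemma CV_inv h v : HC h -> CV v -> CV (actV Γ h v).
Proof.
  destruct Hsec as [_ [[IV _] _]]. intros [hh ch] [dv cv]. split; auto.
  eapply crt_trans. apply ch. apply crt_act; auto.
Qed.

Lemma trV : exists lv, transversal (actV Γ) H DV lv.
Proof.
  destruct Hsec as [_ [[IV _] [[l hl] _]]].
  eapply (trans_exists G _ (actV Γ) (actV1 _ Γ) (actVM _ Γ) H HH DV l); eauto.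
Qed.
Lemma trE : exists le, transversal (actE Γ) H DE le.
Proof.
  destruct Hsec as [_ [[_ IE] [_ [l hl]]]].
  eapply (trans_exists G _ (actE Γ) (actE1 _ Γ) (actEM _ Γ) H HH DE l); eauto.
Qed.

Definition P w := exists h, H h /\ crt u (actV Γ h w).
Definition D2V w := DV w /\ ~ P w.
Definition D2E e := DE e /\ ~ P (src Γ e).

Lemma P_crt a b : crt a b -> P a -> P b.
Proof. intros c [h [hh ch]]. exists h; split; auto. eapply crt_trans; eauto. apply crt_act; auto. Qed.
Lemma P_act k w : H k -> (P (actV Γ k w) <-> P w).
Proof.
  intros hk; split.
  - intros [h [hh ch]]. exists (gmul G h k); split. apply H_mul; auto. rewrite actVM; auto.
  - intros [h [hh ch]]. exists (gmul G h (ginv G k)); split. apply H_mul; auto. apply H_inv; auto.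
    rewrite actVM, (act_invl G _ (actV Γ) (actV1 _ Γ) (actVM _ Γ)); auto.
Qed.
Lemma PE_act k e : H k -> DE e -> (P (src Γ (actE Γ k e)) <-> P (src Γ e)).
Proof.
  intros hk de. rewrite <- (P_act k (src Γ e)); auto. pose proof (act_src_crt k e hk de).
  split; apply P_crt; auto. apply crt_sym; auto.
Qed.

Lemma splitV lv : transversal (actV Γ) H DV lv ->
  transversal (actV Γ) H D2V (filter (fun x => negb (dec (P x))) lv) /\
  exists l', transversal (actV Γ) HC CV l' /\ SV Γ H lv = SV Γ HC l' + SV Γ H (filter (fun x => negb (dec (P x))) lv).
Proof.
  destruct Hsec as [_ [[IV _] _]].
  intros tv. destruct (trans_split G _ (actV Γ) (actV1 _ Γ) (actVM _ Γ) H HC HH DV CV P lv tv) as [t1 [l' [t2 hs]]].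
  - intros k x hk _; apply P_act; auto.
  - intros x dx [h [hh ch]]. exists h; split; auto; split; auto.
  - intros x [dx cx]. split; auto. exists (gone G); split. apply HH. rewrite actV1; auto.
  - intros h [hh _]; auto.
  - intros h a hh [_ ca] [_ cha]. apply (HC_of h a); auto.
  - intros; apply CV_inv; auto.
  - split; auto. exists l'; split; auto. unfold SV. rewrite (sumR_filter _ (fun x => dec (P x))).
    f_equal. rewrite hs. apply sumR_ext_in. intros x hx. f_equal. apply inv_card_ext. intros h; rewrite stabV_HC; try tauto.
    destruct t2 as [_ [d _]]; auto.
    intros k x hk _. unfold stabV. rewrite (stab_conj G _ (actV Γ) (actV1 _ Γ) (actVM _ Γ) H HH k x); auto.
Qed.

Lemma splitE le : transversal (actE Γ) H DE le ->
  transversal (actE Γ) H D2E (filter (fun x => negb (dec (P (src Γ x)))) le) /\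
  exists l', transversal (actE Γ) HC CE l' /\ SE Γ H le = SE Γ HC l' + SE Γ H (filter (fun x => negb (dec (P (src Γ x)))) le).
Proof.
  destruct Hsec as [_ [[_ IE] _]].
  intros te. destruct (trans_split G _ (actE Γ) (actE1 _ Γ) (actEM _ Γ) H HC HH DE CE (fun e => P (src Γ e)) le te) as [t1 [l' [t2 hs]]].
  - intros k x hk d. apply PE_act; auto.
  - intros x dx [h [hh ch]]. exists h; split; auto; split; auto. eapply crt_trans; eauto. apply act_src_crt; auto.
  - intros x [dx cx]. split; auto. exists (gone G); split. apply HH. rewrite actV1; auto.
  - intros h [hh _]; auto.
  - intros h a hh ca cha. apply (HC_ofE h a); auto.
  - intros; apply CV_invE; auto.
  - split; auto. exists l'; split; auto. unfold SE. rewrite (sumR_filter _ (fun x => dec (P (src Γ x)))).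
    f_equal. rewrite hs. apply sumR_ext_in. intros x hx. f_equal. apply inv_card_ext. intros h; rewrite stabE_HC; try tauto.
    destruct t2 as [_ [d _]]; auto.
    intros k x hk _. rewrite angle_inv. unfold stabE. rewrite (stab_conj G _ (actE Γ) (actE1 _ Γ) (actEM _ Γ) H HH k x); auto.
Qed.
Lemma C_section : section Γ HC CV CE.
Proof.
  destruct Hsec as [SG [[IV IE] _]].
  split; [|split; [|split]].
  - intros e [de ce]. destruct (SG e de). split; split; auto. eapply crt_trans; eauto. apply edge_crt; auto.
  - split; intros. apply CV_inv; auto. apply CV_invE; auto.
  - destruct trV as [lv tv]. destruct (splitV lv tv) as [_ [l' [[_ [_ [c _]]] _]]]. exists l'; auto.
  - destruct trE as [le te]. destruct (splitE le te) as [_ [l' [[_ [_ [c _]]] _]]]. exists l'; auto.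
Qed.

Lemma D2_section : section Γ H D2V D2E.
Proof.
  destruct Hsec as [SG [[IV IE] [_ _]]].
  split; [|split; [|split]].
  - intros e [de np]. destruct (SG e de). split; split; auto.
    intros p; apply np. apply (P_crt (tgt Γ e)); auto. apply crt_sym, edge_crt; auto.
  - split.
    + intros k v hk [dv np]. split; auto. rewrite P_act; auto.
    + intros k e hk [de np]. split; auto. rewrite PE_act; auto.
  - destruct trV as [lv tv]. destruct (splitV lv tv) as [[_ [_ [c _]]] _]. exists (filter (fun x => negb (dec (P x))) lv); auto.
  - destruct trE as [le te]. destruct (splitE le te) as [[_ [_ [c _]]] _]. eexists; apply c.
Qed.

Hypothesis Hsp : spurless Γ DV DE.

Lemma C_spurless : spurless Γ CV CE.
Proof.
  intros v [dv cv] [e [b [ce [eb U]]]]. apply (Hsp v dv). exists e, b. split; [apply ce|split; auto].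
  intros e' b' de' eb'. apply U; auto. split; auto. eapply crt_trans. apply cv. rewrite <- eb'.
  apply crt_sym, endpt_crt; auto.
Qed.

Lemma D2_spurless : spurless Γ D2V D2E.
Proof.
  intros v [dv np] [e [b [ce [eb U]]]]. apply (Hsp v dv). exists e, b. split; [apply ce|split; auto].
  intros e' b' de' eb'. apply U; auto. split; auto. intros p. apply np. rewrite <- eb'.
  apply (P_crt (src Γ e')); auto. apply endpt_crt; auto.
Qed.

Lemma C_path a b : crt a b -> crt u a -> clos_refl_trans (V Γ) (adj Γ CE) a b.
Proof.
  induction 1 as [x y [e [de o]]| x | x y z h1 IH1 h2 IH2]; intros cu.
  - apply rt_step. exists e. split; auto. split; auto.
    destruct o as [[<- <-]|[<- <-]]; auto. eapply crt_trans. apply cu. apply crt_sym, edge_crt; auto.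
  - apply rt_refl.
  - eapply rt_trans. apply IH1; auto. apply IH2. eapply crt_trans; eauto.
Qed.

Lemma C_connected : connected Γ CV CE.
Proof.
  intros a b [_ ca] [_ cb]. eapply rt_trans. apply crt_gen_sym. apply C_path. apply ca. apply rt_refl.
  apply C_path. apply cb. apply rt_refl.
Qed.

Lemma C_noedge : (forall e, ~ CE e) -> forall w, CV w -> w = u.
Proof.
  intros ne w [_ cw]. apply clos_rt_rt1n in cw. destruct cw as [|y z [e [de o]] _]; auto.
  exfalso. apply (ne e). split; auto. destruct o as [[e1 e2]|[e1 e2]]; [rewrite e1; apply rt_refl| rewrite <- e2; apply crt_sym, edge_crt; auto].
Qed.

Lemma decomp :
  kappa Γ H DV DE - 2 * PI * inv_card H =
  (kappa Γ HC CV CE - 2 * PI * inv_card HC) + (kappa Γ H D2V D2E - 2 * PI * inv_card H).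
Proof.
  destruct trV as [lv tv]. destruct trE as [le te].
  destruct (splitV lv tv) as [t2v [lcv [tcv ev]]].
  destruct (splitE le te) as [t2e [lce [tce ee]]].
  rewrite (kappa_eq G Γ H DV DE lv le), (kappa_eq G Γ HC CV CE lcv lce),
    (kappa_eq G Γ H D2V D2E _ _ HH t2v t2e); auto. 2: apply HC_sub.
  rewrite ev, ee. ring.
Qed.
End Comp.
Section Main.
Variable G : Group.
Variable Γ : angled_graph G.
Variable α : R.
Hypothesis Hα : α <= 0.
Hypothesis Hcurv : forall K : G -> Prop, subgroup G K ->
     forall (DV : V Γ -> Prop) (DE : E Γ -> Prop),
       regular_section Γ K DV DE -> kappa Γ K DV DE <= α.
Variable H : G -> Prop.
Hypothesis HH : subgroup G H.

Lemma C_term DV DE u : section Γ H DV DE -> spurless Γ DV DE -> DV u ->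
  kappa Γ (HC G Γ H DE u) (CV G Γ DV DE u) (CE G Γ DE u) - 2 * PI * inv_card (HC G Γ H DE u) <= 0.
Proof.
  intros sec sp du.
  pose proof (HC_sub G Γ H HH DV DE sec u) as sub.
  pose proof (inv_card_ge0 (HC G Γ H DE u)). pose proof PI_RGT_0.
  destruct (classic (exists e, CE G Γ DE u e)) as [he|ne].
  - assert (kappa Γ (HC G Γ H DE u) (CV G Γ DV DE u) (CE G Γ DE u) <= α).
    { apply Hcurv; [exact sub|]. split; [apply C_section; auto|split; [apply C_spurless; auto|split; [apply C_connected|auto]]]. }
    nra.
  - assert (ne' : forall e, ~ CE G Γ DE u e) by (intros e he; apply ne; eauto).
    rewrite (kappa_eq G Γ _ _ _ [u] []); auto.
    + unfold SV, SE, sumR; simpl. pose proof (inv_card_ge0 (stabV Γ (HC G Γ H DE u) u)). nra.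
    + split; [|split; [|split]].
      * constructor; auto. constructor.
      * intros x [<-|[]]. split; auto. apply rt_refl.
      * intros x hx. exists u, (gone G). split; [left; auto|split; [apply sub|]]. rewrite actV1.
        symmetry. eapply C_noedge; eauto.
      * intros x y k [<-|[]] [<-|[]]; auto.
    + split; [|split; [|split]].
      * constructor.
      * intros x [].
      * intros x hx. exfalso; eapply ne'; eauto.
      * intros x y k [].
Qed.

Lemma phi_le0 n : forall DV DE lv, section Γ H DV DE -> spurless Γ DV DE ->
  transversal (actV Γ) H DV lv -> (length lv <= n)%nat ->
  kappa Γ H DV DE <= 2 * PI * inv_card H.
Proof.
  induction n as [|n IH]; intros DV DE lv sec sp tv hl.
  - destruct lv; [|simpl in hl; lia].
    assert (nv : forall v, ~ DV v).
    { intros v dv. destruct tv as [_ [_ [c _]]]. destruct (c v dv) as [y [k [[] _]]]. }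
    assert (t1 : transversal (actV Γ) H DV []).
    { split; [|split; [|split]].
      * constructor.
      * intros x [].
      * intros x hx; exfalso; first [exact (nv x hx) | destruct sec as [SG _]; destruct (SG x hx) as [h1 _]; exact (nv _ h1)].
      * intros x y k []. }
    assert (t2 : transversal (actE Γ) H DE []).
    { split; [|split; [|split]].
      * constructor.
      * intros x [].
      * intros x hx; exfalso; first [exact (nv x hx) | destruct sec as [SG _]; destruct (SG x hx) as [h1 _]; exact (nv _ h1)].
      * intros x y k []. }
    rewrite (kappa_eq G Γ H DV DE [] [] HH t1 t2).
    unfold SV, SE, sumR; simpl; lra.
  - destruct lv as [|u rest].
    + apply (IH DV DE []); auto. simpl; lia.
    + assert (du : DV u) by (destruct tv as [_ [d _]]; apply d; left; auto).
      pose proof (decomp G Γ H HH DV DE sec u) as dc.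
      pose proof (C_term DV DE u sec sp du).
      destruct (splitV G Γ H HH DV DE sec u _ tv) as [t2 _].
      assert (kappa Γ H (D2V G Γ H DV DE u) (D2E G Γ H DE u) <= 2 * PI * inv_card H).
      { eapply IH. apply D2_section; auto. apply D2_spurless; auto. apply t2.
        simpl. assert (dec (P G Γ H DE u u) = true) as ->.
        { apply decP. exists (gone G). split. apply HH. rewrite actV1. apply rt_refl. }
        simpl. pose proof (filter_length_le (fun x => negb (dec (P G Γ H DE u x))) rest). simpl in hl. lia. }
      lra.
Qed.
Variables (DV : V Γ -> Prop) (DE : E Γ -> Prop).
Hypothesis Hsec : section Γ H DV DE.
Hypothesis Hsp : spurless Γ DV DE.

Lemma part1 : (exists e, DE e) -> kappa Γ H DV DE <= α.
Proof.
  intros [e0 de0]. set (u := src Γ e0).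
  assert (du : DV u) by (destruct Hsec as [SG _]; apply (SG e0 de0)).
  pose proof (decomp G Γ H HH DV DE Hsec u) as dc.
  assert (kappa Γ (HC G Γ H DE u) (CV G Γ DV DE u) (CE G Γ DE u) <= α).
  { pose proof (HC_sub G Γ H HH DV DE Hsec u) as sub.
    apply Hcurv; [exact sub|]. split; [apply C_section; auto|split; [apply C_spurless; auto|split; [apply C_connected|]]].
    exists e0. split; auto. apply rt_refl. }
  destruct (trV G Γ H HH _ _ (D2_section G Γ H HH DV DE Hsec u)) as [l2 t2].
  pose proof (phi_le0 (length l2) _ _ l2 (D2_section G Γ H HH DV DE Hsec u) (D2_spurless G Γ H DV DE Hsec u Hsp) t2 (le_n _)).
  assert (inv_card H <= inv_card (HC G Γ H DE u)).
  { apply inv_card_sub. intros h [hh _]; auto. exists (gone G). apply (HC_sub G Γ H HH DV DE Hsec u). }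
  pose proof PI_RGT_0.
  assert (PI * inv_card H <= PI * inv_card (HC G Γ H DE u)) by (apply Rmult_le_compat_l; lra).
  lra.
Qed.
End Main.

Theorem proposition7p2 (G : Group) (Γ : angled_graph G) (α : R) (Hα : α <= 0)
  (Hcurv : forall K : G -> Prop, subgroup G K ->
     forall (DV : V Γ -> Prop) (DE : E Γ -> Prop),
       regular_section Γ K DV DE -> kappa Γ K DV DE <= α)
  (H : G -> Prop) (HH : subgroup G H)
  (DV : V Γ -> Prop) (DE : E Γ -> Prop)
  (Hsec : section Γ H DV DE) (Hne : exists v, DV v) (Hsp : spurless Γ DV DE) :
  ((exists e, DE e) -> kappa Γ H DV DE <= α) /\
  (0 < kappa Γ H DV DE <->
     ((exists v, DV v /\ forall w, DV w -> w = v) /\ (forall e, ~ DE e) /\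
      group_finite G H)).
Proof.
  pose proof (part1 G Γ α Hα Hcurv H HH DV DE Hsec Hsp) as P1.
  pose proof PI_RGT_0.
  split; auto.
  assert (Hgone : H (gone G)) by apply HH.
  split.
  - intros pos.
    assert (ne : forall e, ~ DE e).
    { intros e de. assert (kappa Γ H DV DE <= α) by (apply P1; eauto). lra. }
    assert (te : transversal (actE Γ) H DE []).
    { split; [|split; [|split]]. constructor. intros x []. intros x hx; exfalso; exact (ne x hx). intros x y k []. }
    destruct (trV G Γ H HH DV DE Hsec) as [lv tv].
    rewrite (kappa_eq G Γ H DV DE lv [] HH tv te) in pos.
    unfold SE, sumR in pos; simpl in pos.
    assert (SVge : forall l, 0 <= SV Γ H l).
    { intros l. apply sumR_ge0. intros x _. pose proof (inv_card_ge0 (stabV Γ H x)). nra. }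
    assert (stab_le : forall x, PI * inv_card H <= PI * inv_card (stabV Γ H x)).
    { intros x. apply Rmult_le_compat_l. lra. apply inv_card_sub. intros h [hh _]; auto.
      exists (gone G). split; auto. apply actV1. }
    assert (fin : group_finite G H).
    { apply NNPP. intros nf. rewrite (inv_card_inf H nf) in pos. pose proof (SVge lv). lra. }
    split; [|split; auto].
    destruct lv as [|a [|b rest]].
    + exfalso. destruct Hne as [v dv]. destruct tv as [_ [_ [c _]]]. destruct (c v dv) as [y [k [[] _]]].
    + exists a. split. destruct tv as [_ [d _]]. apply d; left; auto.
      intros w dw. apply NNPP; intros nw.
      destruct tv as [_ [_ [c _]]]. destruct (c w dw) as [y [k [[<-|[]] [hk e]]]].
      assert (2 * inv_card H <= inv_card (stabV Γ H a)).
      { apply (inv_card_two _ _ (fun h => gmul G k h) (fun h => gmul G (ginv G k) h)).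
        - intros h [hh _]; auto.
        - intros h [hh _]. apply HH; auto.
        - intros h [hh eh] [_ e2]. apply nw. rewrite <- e. rewrite actVM, eh in e2. rewrite e2. auto.
        - intros h _. rewrite gmulA, gmulV, gmul1. auto.
        - exists (gone G). split; auto. apply actV1. }
      unfold SV, sumR in pos; simpl in pos. nra.
    + exfalso. unfold SV in pos. rewrite !sumR_cons in pos. fold (SV Γ H rest) in pos.
      pose proof (SVge rest). pose proof (stab_le a). pose proof (stab_le b). lra.
  - intros [[v [dv uv]] [ne [l hl]]].
    assert (te : transversal (actE Γ) H DE []).
    { split; [|split; [|split]]. constructor. intros x []. intros x hx; exfalso; exact (ne x hx). intros x y k []. }
    assert (tv : transversal (actV Γ) H DV [v]).
    { split; [|split; [|split]].
      - constructor; auto. constructor.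
      - intros x [<-|[]]; auto.
      - intros x hx. exists v, (gone G). split; [left; auto|split; auto]. rewrite actV1. symmetry; auto.
      - intros x y k [<-|[]] [<-|[]]; auto. }
    rewrite (kappa_eq G Γ H DV DE [v] [] HH tv te).
    assert (inv_card (stabV Γ H v) = inv_card H).
    { apply inv_card_ext. intros h; unfold stabV; split. tauto. intros hh; split; auto.
      apply uv. destruct Hsec as [_ [[IV _] _]]. apply IV; auto. }
    unfold SV, SE, sumR; simpl. rewrite H1.
    rewrite (inv_card_fin H l hl).
    assert (0 < length l)%nat. { destruct hl as [_ h]. apply h in Hgone. destruct l; simpl in *; [contradiction|lia]. }
    assert (0 < / INR (length l)) by (apply Rinv_0_lt_compat, lt_0_INR; auto).
    nra.
Qed.
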